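(* Under the standing assumptions, let $\{x_i\}_{i=1}^N$ be a solution of the delayed Hegselmann–Krause system. Then for every $n\in\mathbb{N}_0$ and all $i,j=1,\dots,N$, $$|x_i(s)-x_j(t)|\le D_n\qquad\text{for all } s,t\ge n\bar\tau-\bar\tau.$$ In particular $|x_i(s)-x_j(t)|\le D_0$ for all $s,t\ge-\bar\tau$, and $D_{n+1}\le D_n$ for all $n\in\mathbb{N}_0$.
   Context: Standing assumptions: $N\ge 2$, $d\ge 1$, $\bar\tau>0$; $\tau:[0,\infty)\to[0,\bar\tau]$ continuous; $\psi:\mathbb{R}^d\times\mathbb{R}^d\to\mathbb{R}$ continuous, bounded and strictly positive, $K:=\|\psi\|_\infty$; initial data $x_i^0:[-\bar\tau,0]\to\mathbb{R}^d$ continuous. The delayed Hegselmann–Krause system is $$\frac{d}{dt}x_i(t)=\frac{1}{N-1}\sum_{j\ne i}\psi\big(x_i(t),x_j(t-\tau(t))\big)\big(x_j(t-\tau(t))-x_i(t)\big),\quad t>0,$$ with $x_i=x_i^0$ on $[-\bar\tau,0]$; a solution means continuous $x_i:[-\bar\tau,\infty)\to\mathbb{R}^d$, differentiable on $(0,\infty)$, satisfying this. $\mathbb{N}_0=\{0,1,2,\dots\}$. For $n\in\mathbb{N}_0$, $D_n:=\max_{i,j=1,\dots,N}\max_{s,t\in[n\bar\tau-\bar\tau,\,n\bar\tau]}|x_i(s)-x_j(t)|$. *)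

(* Defs.v *)
From HB Require Import structures.
From mathcomp Require Import all_boot all_order all_algebra.
From mathcomp Require Import all_classical all_reals all_analysis.
Set Implicit Arguments. Unset Strict Implicit. Unset Printing Implicit Defensive.
Import Order.TTheory GRing.Theory Num.Theory.
Import numFieldNormedType.Exports.
Local Open Scope classical_set_scope.
Local Open Scope ring_scope.

Definition enorm {R : realType} {d : nat} (v : 'rV[R]_d) : R :=
  Num.sqrt (\sum_(k < d) (v ord0 k) ^+ 2).

Definition hk_rhs {R : realType} {N d : nat}
  (psi : 'rV[R]_d -> 'rV[R]_d -> R) (tau : R -> R)
  (x : 'I_N -> R -> 'rV[R]_d) (i : 'I_N) (t : R) : 'rV[R]_d :=
  (N.-1%:R)^-1 *: \sum_(j < N | j != i)
     psi (x i t) (x j (t - tau t)) *: (x j (t - tau t) - x i t).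

Definition hk_solution {R : realType} {N d : nat}
  (psi : 'rV[R]_d -> 'rV[R]_d -> R) (tau : R -> R) (taubar : R)
  (x0 : 'I_N -> R -> 'rV[R]_d) (x : 'I_N -> R -> 'rV[R]_d) : Prop :=
  (forall i, {within `[- taubar, +oo[, continuous (x i)}) /\
  (forall i t, - taubar <= t <= 0 -> x i t = x0 i t) /\
  (forall i t, 0 < t -> derivable (x i) t 1 /\
                        'D_1 (x i) t = hk_rhs psi tau x i t).

Definition Dn {R : realType} {N d : nat} (taubar : R)
  (x : 'I_N -> R -> 'rV[R]_d) (n : nat) : R :=
  sup [set r | exists i j s t,
        n%:R * taubar - taubar <= s <= n%:R * taubar /\
        n%:R * taubar - taubar <= t <= n%:R * taubar /\
        r = enorm (x i s - x j t)].

(* Main.v *)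
Require Import Defs.
From HB Require Import structures.
From mathcomp Require Import all_boot all_order all_algebra.
From mathcomp Require Import all_classical all_reals all_analysis.
From mathcomp Require Import ring lra.
Import Order.TTheory GRing.Theory Num.Theory.
Import numFieldNormedType.Exports.
Local Open Scope classical_set_scope.
Local Open Scope ring_scope.
Definition dot {R : realType} {d : nat} (u v : 'rV[R]_d) : R :=
  \sum_(k < d) u ord0 k * v ord0 k.
Definition Q {R : realType} {d : nat} (u : 'rV[R]_d) : R := dot u u.

Lemma dotC {R : realType} {d : nat} (u v : 'rV[R]_d) : dot u v = dot v u.
Proof. by apply: eq_bigr => k _; rewrite mulrC. Qed.

Lemma dotDr {R : realType} {d : nat} (u v w : 'rV[R]_d) :
  dot u (v + w) = dot u v + dot u w.
Proof. by rewrite /dot -big_split; apply: eq_bigr => k _; rewrite mxE mulrDr. Qed.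

Lemma dotNr {R : realType} {d : nat} (u v : 'rV[R]_d) : dot u (- v) = - dot u v.
Proof. by rewrite /dot -sumrN; apply: eq_bigr => k _; rewrite mxE mulrN. Qed.

Lemma dotBr {R : realType} {d : nat} (u v w : 'rV[R]_d) :
  dot u (v - w) = dot u v - dot u w.
Proof. by rewrite dotDr dotNr. Qed.

Lemma dotZr {R : realType} {d : nat} (u v : 'rV[R]_d) (a : R) :
  dot u (a *: v) = a * dot u v.
Proof. by rewrite /dot mulr_sumr; apply: eq_bigr => k _; rewrite mxE mulrCA. Qed.

Lemma dot_sumr {R : realType} {d N : nat} (u : 'rV[R]_d) (P : pred 'I_N) (F : 'I_N -> 'rV[R]_d) :
  dot u (\sum_(j < N | P j) F j) = \sum_(j < N | P j) dot u (F j).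
Proof.
rewrite /dot exchange_big /=; apply: eq_bigr => k _.
by rewrite summxE mulr_sumr.
Qed.

Lemma Q_ge0 {R : realType} {d : nat} (u : 'rV[R]_d) : 0 <= Q u.
Proof. by apply: sumr_ge0 => k _; rewrite -expr2 sqr_ge0. Qed.

Lemma QD {R : realType} {d : nat} (u v : 'rV[R]_d) :
  Q (u + v) = Q u + 2 * dot u v + Q v.
Proof.
rewrite /Q /dot mulr_sumr -!big_split /=; apply: eq_bigr => k _.
rewrite !mxE; ring.
Qed.

Lemma QN {R : realType} {d : nat} (u : 'rV[R]_d) : Q (- u) = Q u.
Proof. by apply: eq_bigr => k _; rewrite mxE mulrNN. Qed.

Lemma QB_sym {R : realType} {d : nat} (u v : 'rV[R]_d) : Q (u - v) = Q (v - u).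
Proof. by rewrite -QN opprB. Qed.

Lemma dot_key {R : realType} {d : nat} (a b : 'rV[R]_d) :
  2 * dot a (b - a) <= Q b - Q a.
Proof.
have := QD a (b - a); rewrite addrC subrK => ->.
have := Q_ge0 (b - a); lra.
Qed.

Lemma QB_le {R : realType} {d : nat} (u v : 'rV[R]_d) :
  Q (u - v) <= 2 * Q u + 2 * Q v.
Proof.
have h1 := QD u (- v); have h2 := QD u v.
rewrite dotNr QN in h1; have := Q_ge0 (u + v); lra.
Qed.

Lemma enormE {R : realType} {d : nat} (u : 'rV[R]_d) : enorm u = Num.sqrt (Q u).
Proof. by rewrite /enorm /Q /dot; congr Num.sqrt; apply: eq_bigr => k _; rewrite expr2. Qed.
Lemma coordc {R : realType} {d : nat} k : continuous (fun w : 'rV[R]_d => w ord0 k).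
Proof. exact: coord_continuous. Qed.

Lemma dot_cont {R : realType} {d : nat} (a : 'rV[R]_d) : continuous (dot a).
Proof.
rewrite /dot; apply: (continuous_big add_continuous) => k _ w.
apply: (@continuousM _ _ (fun=> a ord0 k) (fun w : 'rV[R]_d => w ord0 k)).
  exact: cst_continuous.
exact: coordc.
Qed.

Lemma Q_cont {R : realType} {d : nat} (c : 'rV[R]_d) : continuous (fun w : 'rV[R]_d => Q (w - c)).
Proof.
rewrite /Q /dot; apply: (continuous_big add_continuous) => k _ w.
have hk : {for w, continuous (fun x : 'rV[R]_d => (x - c) ord0 k)}.
  have -> : (fun x : 'rV[R]_d => (x - c) ord0 k) = (fun x : 'rV[R]_d => x ord0 k - c ord0 k).
    by apply: funext => x; rewrite !mxE.
  have h1 := coordc k w.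
  have h2 := @cst_continuous _ _ (c ord0 k) w.
  have := continuousB h1 h2.
  by [].
exact: (@continuousM _ _ (fun x : 'rV[R]_d => (x - c) ord0 k) (fun x : 'rV[R]_d => (x - c) ord0 k)).
Qed.
Lemma dot_quot {R : realType} {d : nat} (a : 'rV[R]_d) (f : R -> 'rV[R]_d) (T : R) :
  derivable f T 1 ->
  (fun h : R => dot a (h^-1 *: (f (h *: 1 + T) - f T))) @ 0^' --> dot a ('D_1 f T).
Proof.
move=> df.
have h := continuous_cvg _ (@dot_cont R d a ('D_1 f T)) df.
exact: h.
Qed.
Lemma near_R {R : realType} (T : R) (P : R -> Prop) :
  (\forall s \near T, P s) -> exists2 e : R, 0 < e & forall s, `|T - s| < e -> P s.
Proof. by move=> /nbhs_normP [e e0 he]; exists e => // s hs; apply: he. Qed.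

Lemma dot_quot' {R : realType} {d : nat} (a : 'rV[R]_d) (f : R -> 'rV[R]_d) (T : R) :
  derivable f T 1 ->
  (fun h : R => dot a (h^-1 *: (f (h + T) - f T))) @ 0^' --> dot a ('D_1 f T).
Proof.
move=> /(dot_quot a).
have -> : (fun h : R => dot a (h^-1 *: (f (h *: 1 + T) - f T))) = (fun h : R => dot a (h^-1 *: (f (h + T) - f T))).
  by apply: funext => h; rewrite /GRing.scale /= mulr1.
by [].
Qed.

Lemma within_g {R : realType} {d : nat} (A : set R) (f : R -> 'rV[R]_d) (c : 'rV[R]_d) T :
  {within A, continuous f} -> A T ->
  (fun s => Q (f s - c)) @ within A (nbhs T) --> Q (f T - c).
Proof.
move=> hf AT.
have h1 : f @ within A (nbhs T) --> f T.
  have := hf T; rewrite /= nbhs_subspace_in //.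
exact: (continuous_cvg _ (@Q_cont R d c (f T)) h1).
Qed.
Lemma ball_inv {R : realType} {N d : nat} (taubar : R) (tau : R -> R)
  (psi : 'rV[R]_d -> 'rV[R]_d -> R) (x0 x : 'I_N -> R -> 'rV[R]_d)
  (c : 'rV[R]_d) (r2 t0 : R) :
  0 < taubar ->
  (forall t, 0 <= t -> 0 <= tau t <= taubar) ->
  (forall y z, 0 < psi y z) ->
  hk_solution psi tau taubar x0 x ->
  - taubar <= t0 -> 0 <= t0 + taubar ->
  (forall l s, t0 <= s <= t0 + taubar -> Q (x l s - c) <= r2) ->
  forall i t, t0 <= t -> Q (x i t - c) <= r2.
Proof.
move=> tb0 htau hpsi [hcont [_ hder]] ht0 ht0' win i t ht.
apply/ler_addgt0Pr => e e0.
have tt0 : 0 < t - t0 + 1 by lra.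
pose eps := e / (t - t0 + 1).
have eps0 : 0 < eps by rewrite /eps divr_gt0.
pose b s := r2 + eps * (s - t0 + 1).
pose g l s := Q (x l s - c).
suff key : forall l s, t0 <= s -> g l s < b s.
  have := key i t ht; rewrite /b /eps mulrVK ?unitfE ?gt_eqF //; exact: ltW.
have bmono : forall s s', s <= s' -> b s <= b s'.
  move=> s s' hs; rewrite /b lerD2l ler_pM2l //; lra.
have bwin : forall s, t0 <= s -> r2 < b s.
  move=> s hs; rewrite /b ltrDl; apply: mulr_gt0 => //; lra.
case: (pselect (exists l s, t0 <= s /\ b s <= g l s)) => [[l0 [s0 [hs0 hb0]]] | hno]; last first.
  move=> l s hs; rewrite ltNge; apply/negP => hle; apply: hno; by exists l, s.
exfalso.
pose A := [set s | t0 <= s /\ exists l, b s <= g l s].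
have A0 : A s0 by split => //; exists l0.
have lbA : lbound A t0 by move=> s [].
have hinfA : has_inf A by split; [exists s0 | exists t0].
pose T := inf A.
have hT0 : t0 <= T by apply: lb_le_inf => //; exists s0.
have before : forall s, t0 <= s -> s < T -> forall l, g l s < b s.
  move=> s h1 h2 l; rewrite ltNge; apply/negP => h.
  have As : A s by split => //; exists l.
  have := ge_inf (ex_intro _ t0 lbA) As; rewrite -/T; lra.
have atT : exists l, b T <= g l T.
  apply: contrapT => hn.
  have hall : forall l, g l T < b T.
    by move=> l; rewrite ltNge; apply/negP => h; apply: hn; exists l.
  have nearT : \forall s \near within `[- taubar, +oo[ (nbhs T), forall l, g l s < b T.
    apply: filter_forall => l.
    have AT : `[- taubar, +oo[%classic T by rewrite /= in_itv /= andbT; lra.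
    have hg := within_g _ _ c _ (hcont l) AT.
    exact: (cvgr_lt _ hg _ (hall l)).
  rewrite near_withinE in nearT.
  have [del del0 hdel] := near_R _ _ nearT.
  have [y Ay hy] := inf_adherent del0 hinfA.
  have Ty : T <= y := ge_inf (ex_intro _ t0 lbA) Ay.
  case: Ay => hy0 [l hl].
  have := hdel y _ _ l.
  have hby := bmono _ _ Ty.
  rewrite /= in_itv /= andbT.
  have -> : `|T - y| = y - T by rewrite distrC ger0_norm // subr_ge0.
  move=> h.
  have : g l y < b T by apply: h; rewrite /T; lra.
  lra.
have T1 : t0 + taubar < T.
  rewrite ltNge; apply/negP => hT; case: atT => l hl.
  have := win l T; rewrite hT0 hT => /(_ isT).
  have := bwin T hT0; rewrite /g in hl; lra.
pose im := [arg max_(l > l0) g l T]%O.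
have himax : forall j, g j T <= g im T.
  by rewrite /im; case: arg_maxP => //= m _ hm j; exact: hm.
have hbim : b T <= g im T by case: atT => l hl; apply: le_trans hl _; exact: himax.
have T0 : 0 < T by lra.
have [dx Dx] := hder im T T0.
pose a := x im T - c.
have Dle : dot a ('D_1 (x im) T) <= 0.
  rewrite Dx /hk_rhs dotZr dot_sumr.
  apply: mulr_ge0_le0; first by rewrite invr_ge0 ler0n.
  apply: sumr_le0 => j hj; rewrite dotZr.
  apply: mulr_ge0_le0; first exact: ltW (hpsi _ _).
  pose y := x j (T - tau T).
  have -> : y - x im T = (y - c) - a by rewrite /a opprB addrA subrK.
  have hq : Q (y - c) <= Q a.
    case: (eqVneq (tau T) 0) => htT.
      by rewrite /y htT subr0; exact: himax.
    have := htau T (ltW T0); case/andP => ht1 ht2.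
    have ht3 : 0 < tau T by rewrite lt0r htT ht1.
    have hs1 : t0 <= T - tau T by lra.
    have hs2 : T - tau T < T by lra.
    have := before _ hs1 hs2 j.
    have := bmono (T - tau T) T (ltW hs2).
    rewrite /g /y -/a in hbim *; lra.
  have := dot_key a (y - c); lra.
have hq := dot_quot' a (x im) T dx.
have hlt : dot a ('D_1 (x im) T) < eps / 2 by lra.
have nr : \forall h \near 0^', dot a (h^-1 *: (x im (h + T) - x im T)) < eps / 2 := cvgr_lt _ hq _ hlt.
rewrite near_withinE in nr.
have [del del0 hdel] := near_R _ _ (nr _).
pose m := Num.min del (T - t0).
have m0 : 0 < m by rewrite /m lt_min del0 /=; lra.
have mdel : m <= del by rewrite /m ge_min lexx.
have mT : m <= T - t0 by rewrite /m ge_min lexx orbT.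
pose eta := - (m / 2).
have eta0 : eta < 0 by rewrite /eta oppr_lt0 divr_gt0.
have hqe : dot a (eta^-1 *: (x im (eta + T) - x im T)) < eps / 2.
  apply: hdel; last by rewrite lt_eqF.
  rewrite sub0r normrN ltr0_norm // /eta opprK; lra.
have hs1 : t0 <= eta + T by rewrite /eta; lra.
have hs2 : eta + T < T by lra.
have bef := before _ hs1 hs2 im.
pose De := x im (eta + T) - x im T.
have hsum : a + De = x im (eta + T) - c by rewrite addrC /a /De addrA subrK.
have hQ := QD a De.
rewrite hsum in hQ.
have hdq : dot a De = eta * dot a (eta^-1 *: De).
  by rewrite dotZr mulrA mulfV ?mul1r // lt_eqF.
have F6 : eta * (eps / 2) < eta * dot a (eta^-1 *: De) by rewrite ltr_nM2l.
have QDe := Q_ge0 De.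
rewrite /g /b in bef hbim.
rewrite -/De in hqe.
rewrite -/a in hbim.
lra.
Qed.
Lemma Dn_bounded {R : realType} {N d : nat} (taubar : R) (x : 'I_N -> R -> 'rV[R]_d) (n : nat) :
  0 < taubar ->
  (forall i, {within `[- taubar, +oo[, continuous (x i)}) ->
  has_ubound [set r | exists i j s t,
        n%:R * taubar - taubar <= s <= n%:R * taubar /\
        n%:R * taubar - taubar <= t <= n%:R * taubar /\
        r = enorm (x i s - x j t)].
Proof.
move=> tb0 hc.
set lo := n%:R * taubar - taubar; set hi := n%:R * taubar.
have lohi : lo <= hi by rewrite /lo /hi; lra.
have nge : 0 <= hi by rewrite /hi; apply: mulr_ge0; [rewrite ler0n | exact: ltW].
have hmax : forall i, exists c, forall s, s \in `[lo, hi] -> Q (x i s) <= Q (x i c).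
  move=> i.
  have ci : {within `[lo, hi], continuous (fun s => Q (x i s - 0))}.
    have ci0 : {within `[lo, hi], continuous (x i)}.
      apply: continuous_subspaceW (hc i) => s /=; rewrite !in_itv /= andbT => /andP[h1 _].
      rewrite /lo /hi in h1 nge; lra.
    move=> s.
    have := @continuous_comp _ _ _ (from_subspace `[lo, hi] (x i)) (fun w => Q (w - 0)) s (ci0 s) (Q_cont 0 _).
    by [].
  have [c _ hc'] := EVT_max lohi ci.
  exists c => s hs; have := hc' s hs; by rewrite !subr0.
have [C hC] := choice hmax.
pose B := \sum_(k < N) Q (x k (C k)).
have hB : forall i s, lo <= s <= hi -> Q (x i s) <= B.
  move=> i s hs; apply: le_trans (hC i s _) _; first by rewrite in_itv /=.
  rewrite /B (bigD1 i) //= lerDl; apply: sumr_ge0 => k _; exact: Q_ge0.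
exists (Num.sqrt (4 * B)) => r [i [j [s [t [hs [ht ->]]]]]].
rewrite enormE ler_sqrt; last first.
  apply: mulr_ge0 => //; apply: sumr_ge0 => k _; exact: Q_ge0.
have := QB_le (x i s) (x j t); have := hB i s hs; have := hB j t ht; lra.
Qed.

Lemma Q_le_sq {R : realType} {d : nat} (u : 'rV[R]_d) (D : R) :
  0 <= D -> enorm u <= D -> Q u <= D ^+ 2.
Proof.
move=> D0; rewrite enormE => h.
rewrite -(sqr_sqrtr (Q_ge0 u)) !expr2.
by apply: ler_pM => //; exact: sqrtr_ge0.
Qed.

Lemma sq_le_enorm {R : realType} {d : nat} (u : 'rV[R]_d) (D : R) :
  0 <= D -> Q u <= D ^+ 2 -> enorm u <= D.
Proof.
move=> D0 h; rewrite enormE.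
rewrite -(ger0_norm D0) -sqrtr_sqr ler_sqrt //; exact: sqr_ge0.
Qed.

Theorem lemma2p2 (R : realType) (N d : nat) (taubar : R)
  (tau : R -> R) (psi : 'rV[R]_d -> 'rV[R]_d -> R)
  (x0 x : 'I_N -> R -> 'rV[R]_d) :
  (2 <= N)%N -> (1 <= d)%N -> 0 < taubar ->
  {within `[0, +oo[, continuous tau} ->
  (forall t, 0 <= t -> 0 <= tau t <= taubar) ->
  (forall p : 'rV[R]_d * 'rV[R]_d, {for p, continuous (fun q => psi q.1 q.2)}) ->
  (exists K : R, forall y z, psi y z <= K) ->
  (forall y z, 0 < psi y z) ->
  (forall i, {within `[- taubar, 0], continuous (x0 i)}) ->
  hk_solution psi tau taubar x0 x ->
  (forall (n : nat) (i j : 'I_N) (s t : R),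
      n%:R * taubar - taubar <= s -> n%:R * taubar - taubar <= t ->
      enorm (x i s - x j t) <= Dn taubar x n) /\
  (forall (i j : 'I_N) (s t : R), - taubar <= s -> - taubar <= t ->
      enorm (x i s - x j t) <= Dn taubar x 0) /\
  (forall n : nat, Dn taubar x n.+1 <= Dn taubar x n).
Proof.
move=> hN hd tb0 _ htau _ _ hpsi _ hsol.
have hcont := hsol.1.
have N0 : (0 < N)%N by apply: leq_trans hN.
pose i0 : 'I_N := Ordinal N0.
have Dub : forall n i j s t,
    n%:R * taubar - taubar <= s <= n%:R * taubar ->
    n%:R * taubar - taubar <= t <= n%:R * taubar ->
    enorm (x i s - x j t) <= Dn taubar x n.
  move=> n i j s t hs ht; rewrite /Dn.
  apply: (ub_le_sup (Dn_bounded taubar x n tb0 hcont)).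
  by exists i, j, s, t.
have nge : forall n : nat, 0 <= n%:R * taubar.
  by move=> n; apply: mulr_ge0; [rewrite ler0n | exact: ltW].
have D0 : forall n, 0 <= Dn taubar x n.
  move=> n.
  have hw : n%:R * taubar - taubar <= n%:R * taubar <= n%:R * taubar.
    by apply/andP; split; [rewrite lerBlDr lerDl; exact: ltW | exact: lexx].
  apply: le_trans (Dub n i0 i0 _ _ hw hw); by rewrite enormE sqrtr_ge0.
have P1 : forall (n : nat) (i j : 'I_N) (s t : R),
      n%:R * taubar - taubar <= s -> n%:R * taubar - taubar <= t ->
      enorm (x i s - x j t) <= Dn taubar x n.
  move=> n i j s t hs ht.
  set D := Dn taubar x n.
  set t0 := n%:R * taubar - taubar.
  have ht0 : - taubar <= t0 by rewrite /t0; have := nge n; lra.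
  have ht0' : 0 <= t0 + taubar by rewrite /t0 subrK.
  have stepA : forall k rho, t0 <= rho <= t0 + taubar ->
      forall l sig, t0 <= sig -> Q (x l sig - x k rho) <= D ^+ 2.
    move=> k rho hrho.
    apply: (@ball_inv _ _ _ taubar tau psi x0 x (x k rho) (D ^+ 2) t0 tb0 htau hpsi hsol ht0 ht0') => l sig hsig.
    apply: Q_le_sq; first exact: D0.
    by apply: Dub; rewrite -/t0 -(subrK taubar (n%:R * taubar)) -/t0.
  have stepB : forall j t, t0 <= t -> Q (x j t - x i s) <= D ^+ 2.
    apply: (@ball_inv _ _ _ taubar tau psi x0 x (x i s) (D ^+ 2) t0 tb0 htau hpsi hsol ht0 ht0') => l sig hsig.
    rewrite QB_sym; exact: stepA.
  apply: sq_le_enorm; first exact: D0.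
  rewrite QB_sym; exact: stepB.
split; first exact: P1.
split.
  move=> i j s t hs ht; apply: P1; rewrite mul0r sub0r //.
move=> n; apply: ge_sup.
  exists (enorm (x i0 (n.+1%:R * taubar) - x i0 (n.+1%:R * taubar))).
  exists i0, i0, (n.+1%:R * taubar), (n.+1%:R * taubar).
  have := nge n; rewrite -[n.+1]addn1 natrD mulrDl mul1r.
  by split; [|split]; [apply/andP; split; lra | apply/andP; split; lra | ].
move=> r [i [j [s [t [/andP[hs _] [/andP[ht _] ->]]]]]].
apply: P1.
  move: hs; rewrite -[n.+1]addn1 natrD mulrDl mul1r; lra.
move: ht; rewrite -[n.+1]addn1 natrD mulrDl mul1r; lra.
Qed.
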